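(* Let $(\mathbb S,+,\cdot)$ be an S-Field. Then $q_0^*(0)$ does not exist, i.e. the Standard Base $q_0(0)$ of $\mathbb S_0$ is not Reversible.
   Context: An S-Structure is a triple $(\mathbb S,+,\cdot)$ where $\mathbb S$ is a set and $+,\cdot$ are binary operations on $\mathbb S$ such that: $(\mathbb S,+)$ is a commutative group with identity $0$ (the inverse of $s$ is written $-s$, and $s-t:=s+(-t)$); $\mathbb S$ is closed under $\cdot$; and there exists $s\in\mathbb S$ with $0\cdot s\neq 0$ or $s\cdot 0\neq 0$. Multiplication binds tighter than addition. The structures considered come with a distinguished element of $\mathbb S$ denoted $1$. It is Commutative if $s\cdot t=t\cdot s$ for all $s,t$. For a Commutative S-Structure and $\alpha\in\mathbb S$, put $\mathbb S_\alpha=\{s\in\mathbb S:0\cdot s=s\cdot 0=\alpha\}$ and $\Lambda=\{\alpha\in\mathbb S:\mathbb S_\alpha\neq\emptyset\}$. Wheel Distributive: $s\cdot(t+r)+(s\cdot 0)=(s\cdot t)+(s\cdot r)$ for all $s,t,r\in\mathbb S$. S-Associative: for all $m,n\in\mathbb S_0$ and $s\in\mathbb S$, $m\cdot(n\cdot s)=(m\cdot n)\cdot s-([(m-1)\cdot(n-1)]\cdot(0\cdot s))$. Base: if $\mathbb S_0\neq\emptyset$ and $\alpha\in\Lambda$, $q\in\mathbb S_\alpha$ is a Base for $\mathbb S_\alpha$ if $q+\beta\in\mathbb S_\alpha$ for all $\beta\in\mathbb S_0$ and every $s\in\mathbb S_\alpha$ equals $q+\beta$ for some $\beta\in\mathbb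 S_0$. Coordinated: $\mathbb S_0\neq\emptyset$ and every $\mathbb S_\alpha$ with $\alpha\in\Lambda$ has a Base. Standard Bases: a Coordinated Commutative S-Structure has Standard Bases if there is a specified element $q_0(1)\in\mathbb S_1$ which is a Base for $\mathbb S_1$, and for every $\alpha\in\Lambda$ the element $q_0(\alpha):=\alpha\cdot(q_0(1)+1)-1$ (the Standard Base of $\mathbb S_\alpha$) lies in $\mathbb S_\alpha$ and is a Base for $\mathbb S_\alpha$. An Essential S-Structure is an S-Structure that is Commutative, Wheel Distributive, S-Associative, has Standard Bases (in particular is Coordinated), satisfies $0,1\in\mathbb S_0$, and satisfies $\mathbb S_0=\{1\cdot x:x\in\mathbb S_0\}$. A Unity is an element $e\in\Lambda$ with $e\cdot s=s\cdot e=s$ for all $s\in\mathbb S$. Scalar Inverses: the structure has a Unity $e$ and for every $x\in\mathbb S_0$ with $x\neq 0$ there is $x^{-1}\in\mathbb S_0$ with $x\cdot x^{-1}=x^{-1}\cdot x=e$. An S-Ring is an Essential S-Structure with a Unity; an S-Field is an S-Ring with Scalar Inverses. Reversible: in an Essential S-Structure, for $\alpha\in\Lambda$, the Standard Base $q_0(\alpha)$ is Reversible if there exists $\alpha^*\in\Lambda$ with $q_0(1)=\alpha^*\cdot(q_0(\alpha)+\alpha)-\alpha$; in that case the Reversible Standard Base is $q_0^*(\alpha):=q_0(\alpha)$ (and $q_0^*(\alpha)$ is said not to exist otherwise). *)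

(* Defs.v *)
(* An S-Structure is modelled as a MathComp zmodType S
   (the commutative group (S,+) with 0, -, s - t := s + (-t)) together with
   an arbitrary binary operation [mul] (the S-Structure product, NOT the ring
   product), a distinguished element [one] (the element 1), and, for
   Standard Bases, the specified element [q01] (= q_0(1)). *)
From HB Require Import structures.
From mathcomp Require Import all_boot all_order all_algebra.
Set Implicit Arguments. Unset Strict Implicit. Unset Printing Implicit Defensive.
Import GRing.Theory.
Local Open Scope ring_scope.

Section SStructures.
Variables (S : zmodType) (mul : S -> S -> S) (one : S) (q01 : S).

(* closure under mul is automatic (mul : S -> S -> S) *)
Definition S_structure : Prop :=
  exists s : S, mul 0 s <> 0 \/ mul s 0 <> 0.

Definition commutative_S : Prop := forall s t : S, mul s t = mul t s.

Definition S_alpha (alpha s : S) : Prop := mul 0 s = alpha /\ mul s 0 = alpha.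

Definition Lambda (alpha : S) : Prop := exists s, S_alpha alpha s.

Definition wheel_distributive : Prop :=
  forall s t r : S, mul s (t + r) + mul s 0 = mul s t + mul s r.

Definition S_associative : Prop :=
  forall m n s : S, S_alpha 0 m -> S_alpha 0 n ->
    mul m (mul n s) = mul (mul m n) s - mul (mul (m - one) (n - one)) (mul 0 s).

Definition is_base (alpha q : S) : Prop :=
  S_alpha alpha q /\
  (forall beta, S_alpha 0 beta -> S_alpha alpha (q + beta)) /\
  (forall s, S_alpha alpha s -> exists beta, S_alpha 0 beta /\ s = q + beta).

Definition coordinated : Prop :=
  (exists x, S_alpha 0 x) /\ (forall alpha, Lambda alpha -> exists q, is_base alpha q).

Definition q0 (alpha : S) : S := mul alpha (q01 + one) - one.

Definition standard_bases : Prop :=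
  coordinated /\ commutative_S /\
  is_base one q01 /\ (forall alpha, Lambda alpha -> is_base alpha (q0 alpha)).

Definition essential : Prop :=
  S_structure /\ commutative_S /\ wheel_distributive /\ S_associative /\
  standard_bases /\ S_alpha 0 0 /\ S_alpha 0 one /\
  (forall y, S_alpha 0 y <-> exists x, S_alpha 0 x /\ y = mul one x).

Definition unity (e : S) : Prop :=
  Lambda e /\ forall s, mul e s = s /\ mul s e = s.

Definition scalar_inverses : Prop :=
  exists e, unity e /\
    forall x, S_alpha 0 x -> x <> 0 ->
      exists y, S_alpha 0 y /\ mul x y = e /\ mul y x = e.

Definition S_ring : Prop := essential /\ exists e, unity e.

Definition S_field : Prop := S_ring /\ scalar_inverses.

Definition reversible (alpha : S) : Prop :=
  Lambda alpha /\
  exists astar, Lambda astar /\ q01 = mul astar (q0 alpha + alpha) - alpha.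

End SStructures.

(* Main.v *)
Require Import Defs.
From mathcomp Require Import all_boot all_order all_algebra.
Local Open Scope ring_scope.
Import GRing.Theory.

Theorem proposition4p2p2 (S : zmodType) (mul : S -> S -> S) (one q01 : S) :
  S_field mul one q01 -> ~ reversible mul one q01 0.
Proof.
move=> [[[[s0 Hs0] [Hcom [Hwd [Has [[_ [_ [[[H01 H10] _] _]]] [[H00 _] [[H0one Hone0] HS0]]]]]]] _]
  [e [[_ He] _]]].
move=> [_ [astar [_ Hq]]].
have He0 : S_alpha mul 0 e.
  by split; [have [_ ->] := He 0 | have [-> _] := He 0].
have Hw0 : forall t r, mul 0 (t + r) = mul 0 t + mul 0 r.
  by move=> t r; rewrite -Hwd H00 addr0.
have Hneg : forall t, mul 0 (- t) = - mul 0 t.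
  move=> t; apply/eqP; rewrite -subr_eq0 opprK -Hw0 addNr H00 //.
have Hzz : forall s, mul 0 (mul 0 s) = 0.
  move=> s; have := Has e one s He0 (conj H0one Hone0).
  have [-> _] := He (mul one s); have [-> _] := He one.
  rewrite subrr.
  have -> : mul (e - one) 0 = 0.
    by rewrite Hcom Hw0 Hneg H0one subr0; have [_ ->] := He 0.
  by move/eqP; rewrite -subr_eq0 opprB addrC subrK => /eqP.
have Hq0 : q0 mul one q01 0 = 0.
  by rewrite /q0 Hw0 H01 H0one addr0 subrr.
move: Hq; rewrite Hq0 !addr0 subr0 Hcom => Hq.
have Hone : one = 0 by rewrite -H01 Hq Hzz.
have He00 : e = 0.
  have [x [[Hx _] ->]] := (proj1 (HS0 e)) He0.
  by rewrite Hone.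
rewrite He00 in He.
have Hs : forall s : S, s = 0.
  by move=> s; have := Hzz s; have [-> _] := He s; have [-> _] := He s.
case: Hs0 => Hs1; apply: Hs1; rewrite (Hs s0); [exact: H00 | exact: H00].
Qed.
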